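(* Let $\lambda=(\lambda_1,\dots,\lambda_n)$ be a composition of $N$ with positive parts and $\lambda_1\le\cdots\le\lambda_n$. Let $0\ne\mu\subseteq\lambda$ with $\ell(\mu)=d_{|\mu|}=:d$, and let $1\le i_1<\cdots<i_d\le n$ be the positions of the non-zero parts of $\mu$. Then for every $w\in S_d$ and every $j=1,\dots,d$ we have $\mu_{i_j}>\lambda_{i_j}-\min(\lambda_{i_{wj}},\lambda_{i_j})$.
   Context: $(d_1,\dots,d_N)$ is the sequence consisting of $\lambda_n$ copies of $1$, followed by $\lambda_{n-1}$ copies of $2$, ..., followed by $\lambda_1$ copies of $n$. For a composition $\mu=(\mu_1,\dots,\mu_n)$, $\mu\subseteq\lambda$ means $0\le\mu_i\le\lambda_i$ for all $i$, $|\mu|=\sum_i\mu_i$, and $\ell(\mu)$ is the number of non-zero parts. *)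

(* Defs.v *)
From mathcomp Require Import all_boot all_fingroup.
Set Implicit Arguments. Unset Strict Implicit. Unset Printing Implicit Defensive.

(* Compositions are sequences of naturals; part i (1-based in the paper) is
   nth 0 s (i-1) here (0-based). *)

(* The sequence (d_1,...,d_N): lambda_n copies of 1, lambda_{n-1} copies of 2,
   ..., lambda_1 copies of n.  d_k is [nth 0 (dseq lambda) k.-1]. *)
Definition dseq (lambda : seq nat) : seq nat :=
  let n := size lambda in
  flatten [seq nseq (nth 0 lambda (n - 1 - k)) k.+1 | k <- iota 0 n].

Definition nzpos (mu : seq nat) : seq nat :=
  [seq i <- iota 0 (size mu) | nth 0 mu i != 0].

Definition ell (mu : seq nat) : nat := size (nzpos mu).

(* Main.v *)
Require Import Defs.
From mathcomp Require Import all_boot all_fingroup.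
From mathcomp Require Import zify.

Lemma mono_nth (l : seq nat) i j :
  sorted leq l -> i <= j -> j < size l -> nth 0 l i <= nth 0 l j.
Proof.
move=> sl ij jl.
apply: (sorted_leq_nth leq_trans leqnn 0 sl) => //; rewrite inE //.
exact: leq_ltn_trans ij jl.
Qed.

Lemma topsum (l : seq nat) (t : seq nat) : sorted leq l ->
  forall b, b <= size l -> all (fun i => i < b) t -> sorted ltn t ->
  \sum_(i <- t) nth 0 l i <= \sum_(k < size t) nth 0 l (b - 1 - k).
Proof.
move=> sl; elim/last_ind: t => [|t x IH] b bl /allP ab st.
  by rewrite big_nil.
have xb : x < b by apply: ab; rewrite mem_rcons mem_head.
have tx : all (fun i => i < x) t.
  apply/allP => y yt.
  have : subseq [:: y; x] (rcons t x).
    rewrite -cats1 -[ [:: y; x] ]/([:: y] ++ [:: x]).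
    by apply: cat_subseq; [rewrite sub1seq | exact: subseq_refl].
  by move/(subseq_sorted ltn_trans)/(_ st) => /= /andP [].
have st' : sorted ltn t.
  by move: st; rewrite -cats1 => /cat_sorted2 [].
have := IH x (ltnW (leq_trans xb bl)) tx st'.
rewrite big_rcons /= size_rcons big_ord_recl /= addnC => H.
apply: leq_add.
  apply: mono_nth => //; lia.
apply: leq_trans H _; apply: leq_sum => k _.
rewrite /bump /=; apply: mono_nth => //; lia.
Qed.

Lemma dseq_bound (l : seq nat) K d : 1 <= d <= size l ->
  nth 0 (dseq l) K = d -> \sum_(k < d.-1) nth 0 l (size l - 1 - k) <= K.
Proof.
move=> /andP [d1 dn] E.
rewrite leqNgt; apply/negP => HK.
move: E; rewrite /dseq.
have -> : size l = d.-1 + (size l - d.-1) by lia.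
rewrite iotaD map_cat flatten_cat nth_cat.
set A := flatten _.
have sA : size A = \sum_(k < d.-1) nth 0 l (d.-1 + (size l - d.-1) - 1 - k).
  rewrite /A size_flatten /shape -map_comp sumnE big_map.
  rewrite /= -(big_mkord xpredT (fun k => nth 0 l (d.-1 + (size l - d.-1) - 1 - k))).
  by rewrite /index_iota subn0; apply: eq_bigr => k _; rewrite size_nseq.
have e : d.-1 + (size l - d.-1) = size l by lia.
rewrite e in sA *; rewrite -sA in HK; rewrite HK => E.
have : nth 0 A K \in A by rewrite mem_nth.
rewrite E => /flattenP [s /mapP [k]]; rewrite mem_iota => /andP [_ kd] -> /nseqP [dk _].
lia.
Qed.

Theorem lemma3p8 (lambda mu : seq nat) :
  all (fun x => 0 < x) lambda ->
  sorted leq lambda ->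
  size mu = size lambda ->
  (forall i, i < size lambda -> nth 0 mu i <= nth 0 lambda i) ->
  has (fun x => x != 0) mu ->
  ell mu = nth 0 (dseq lambda) (sumn mu).-1 ->
  forall (w : 'S_(ell mu)) (j : 'I_(ell mu)),
    let pj := nth 0 (nzpos mu) j in
    let pwj := nth 0 (nzpos mu) (w j) in
    nth 0 lambda pj - minn (nth 0 lambda pwj) (nth 0 lambda pj) < nth 0 mu pj.
Proof.
move=> hpos sl smu le hnz E w j /=.
set pj := nth 0 (nzpos mu) j.
set pwj := nth 0 (nzpos mu) (w j).
have memS : forall x, x \in nzpos mu -> (x < size lambda) && (nth 0 mu x != 0).
  move=> x; rewrite /nzpos mem_filter mem_iota add0n smu.
  by case/andP => -> /andP [_ ->].
have pS : pj \in nzpos mu by rewrite /pj mem_nth.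
have qS : pwj \in nzpos mu by rewrite /pwj mem_nth.
have /andP [pn mup] := memS _ pS.
have /andP [qn _] := memS _ qS.
case: (leqP (nth 0 lambda pj) (nth 0 lambda pwj)) => h.
  lia.
rewrite ltnNge; apply/negP => Hc.
have pq : pj != pwj by apply/eqP => ee; rewrite ee in h; lia.
set S := nzpos mu in memS pS qS.
have uS : uniq S by rewrite /S /nzpos filter_uniq // iota_uniq.
have sS : sorted ltn S by rewrite /S /nzpos sorted_filter // ?iota_ltn_sorted //; exact: ltn_trans.
set t := rem pwj S.
have pt : pj \in t by rewrite /t mem_rem_uniq // inE pq.
have tS : forall x, x \in t -> x \in S by move=> x; apply: mem_rem.
have ut : uniq t by rewrite /t rem_uniq.
have st : sorted ltn t by rewrite /t rem_filter // sorted_filter //; exact: ltn_trans.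
have sizet : size t = (ell mu).-1 by rewrite /t size_rem.
have dpos : 1 <= ell mu by rewrite /ell -/S; case: (S) pS.
have dn : ell mu <= size lambda.
  by rewrite /ell /nzpos size_filter -smu; apply: leq_trans (count_size _ _) _; rewrite size_iota.
have sumS : sumn mu = \sum_(i <- S) nth 0 mu i.
  rewrite sumnE (big_nth 0) /index_iota subn0 /S /nzpos big_filter.
  rewrite [LHS](bigID (fun i => nth 0 mu i != 0)) /=.
  rewrite [X in _ + X = _]big1 ?addn0 // => i /negbNE/eqP //.
have e1 : \sum_(i <- S) nth 0 mu i = nth 0 mu pwj + \sum_(i <- t) nth 0 mu i.
  by rewrite (perm_big _ (perm_to_rem qS)) big_cons.
have e2 : \sum_(i <- t) nth 0 mu i = nth 0 mu pj + \sum_(i <- rem pj t) nth 0 mu i.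
  by rewrite (perm_big _ (perm_to_rem pt)) big_cons.
have e3 : \sum_(i <- t) nth 0 lambda i = nth 0 lambda pj + \sum_(i <- rem pj t) nth 0 lambda i.
  by rewrite (perm_big _ (perm_to_rem pt)) big_cons.
have le1 : \sum_(i <- rem pj t) nth 0 mu i <= \sum_(i <- rem pj t) nth 0 lambda i.
  rewrite big_seq [X in _ <= X]big_seq; apply: leq_sum => i /mem_rem /tS /memS /andP [? _].
  exact: le.
have le2 := le _ qn.
have le3 : \sum_(i <- t) nth 0 lambda i <= \sum_(k < size t) nth 0 lambda (size lambda - 1 - k).
  apply: topsum => //; apply/allP => x /tS /memS /andP [] //.
have le4 := @dseq_bound lambda (sumn mu).-1 (ell mu).
rewrite dpos dn /= in le4; have {}le4 := le4 isT (esym E).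
rewrite sizet in le3.
move: le1 le2 le3 le4 e1 e2 e3 sumS h Hc mup.
set A := \sum_(i <- rem pj t) nth 0 mu i.
set B := \sum_(i <- rem pj t) nth 0 lambda i.
set C := \sum_(i <- t) nth 0 lambda i.
set D := \sum_(i <- t) nth 0 mu i.
set F := \sum_(i <- S) nth 0 mu i.
set G := \sum_(k < _) _.
move=> *. 
lia.
Qed.
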